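(* Let $r\ge 3$, $\varepsilon>0$, and let $G$ be an $n$-vertex maximal $K_r$-free graph with minimum degree $\delta(G)\ge\left(\frac{2r-5}{2r-3}+\varepsilon\right)n$. Then $G$ is $\varepsilon^{r-2}$-ultra maximal $K_r$-free.
   Context: An $n$-vertex graph $G$ is $\alpha$-ultra maximal $K_r$-free if it is $K_r$-free and for every pair of non-adjacent vertices $u,v$, the induced subgraph $G[N(u)\cap N(v)]$ contains at least $\alpha n^{r-2}$ copies of $K_{r-2}$. A graph is maximal $K_r$-free if it is $K_r$-free and adding any new edge creates a $K_r$. *)

(* Defs.v *)
From HB Require Import structures.
From mathcomp Require Import all_boot all_order all_algebra.
Set Implicit Arguments. Unset Strict Implicit. Unset Printing Implicit Defensive.
Import Order.TTheory GRing.Theory Num.Theory.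

Definition simple_graph (T : finType) (e : rel T) : Prop :=
  symmetric e /\ irreflexive e.

Definition clique (T : finType) (e : rel T) (S : {set T}) : Prop :=
  forall x y, x \in S -> y \in S -> x != y -> e x y.

Definition Kr_free (T : finType) (e : rel T) (r : nat) : Prop :=
  forall S : {set T}, #|S| = r -> ~ clique e S.

Definition add_edge (T : finType) (e : rel T) (u v : T) : rel T :=
  fun x y => [|| e x y, (x == u) && (y == v) | (x == v) && (y == u)].

Definition maximal_Kr_free (T : finType) (e : rel T) (r : nat) : Prop :=
  Kr_free e r /\
  forall u v : T, u != v -> ~~ e u v -> ~ Kr_free (add_edge e u v) r.

Definition nbhd (T : finType) (e : rel T) (v : T) : {set T} := [set x | e v x].

Definition num_cliques (T : finType) (e : rel T) (A : {set T}) (k : nat) : nat :=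
  #|[set S : {set T} | (S \subset A) && (#|S| == k) &&
      [forall x in S, forall y in S, (x != y) ==> e x y]]|.

Local Open Scope ring_scope.

Definition ultra_maximal_Kr_free (R : realFieldType) (T : finType) (e : rel T)
    (r : nat) (alpha : R) : Prop :=
  Kr_free e r /\
  forall u v : T, u != v -> ~~ e u v ->
    alpha * (#|T|%:R ^+ (r - 2)%N) <= (num_cliques e (nbhd e u :&: nbhd e v) (r - 2)%N)%:R.

(* Main.v *)
Require Import Defs.
From HB Require Import structures.
From mathcomp Require Import all_boot all_order all_algebra.
From mathcomp Require Import zify ring lra.
Import Order.TTheory GRing.Theory Num.Theory.
Set Implicit Arguments. Unset Strict Implicit. Unset Printing Implicit Defensive.

Lemma sum_indic (I : finType) (P : pred I) (A : {set I}) :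
  (\sum_(y in A) (P y : nat) = #|[set y in A | P y]|)%N.
Proof.
rewrite -sum1_card big_mkcond /= [RHS]big_mkcond /=.
by apply: eq_bigr => y _; rewrite inE; case: (y \in A); case: (P y).
Qed.

Definition cliqueb (T : finType) (e : rel T) (S : {set T}) :=
  [forall x in S, forall y in S, (x != y) ==> e x y].

Lemma cliquebP (T : finType) (e : rel T) S : reflect (clique e S) (cliqueb e S).
Proof.
apply: (iffP idP) => [/forall_inP H x y xS yS nxy | H].
  by have /forall_inP/(_ y yS)/implyP := H x xS; apply.
apply/forall_inP => x xS; apply/forall_inP => y yS; apply/implyP; exact: H.
Qed.

Lemma add_edge_nu (T : finType) (e : rel T) u v x y :
  x != u -> y != u -> add_edge e u v x y = e x y.
Proof. by move=> xu yu; rewrite /add_edge (negbTE xu) (negbTE yu) /= andbF !orbF. Qed.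

Lemma add_edge_nv (T : finType) (e : rel T) u v x y :
  x != v -> y != v -> add_edge e u v x y = e x y.
Proof. by move=> xv yv; rewrite /add_edge (negbTE xv) (negbTE yv) /= andbF !orbF. Qed.

Lemma arL1 k b x : (x < k -> 1 + 1 + x <= k.+1 + b)%N. Proof. lia. Qed.
Lemma arL2 k : (1 + 1 + k <= k.+1 + true)%N. Proof. rewrite /=; lia. Qed.
Lemma arL3 k b x : (x <= k -> 1 + x <= k.+1 + b)%N. Proof. lia. Qed.
Lemma arL4 k b x : (x <= k.+1 -> x <= k.+1 + b)%N. Proof. lia. Qed.

Local Open Scope ring_scope.

Section Aux.
Variables (T : finType) (e : rel T).
Hypothesis esym : symmetric e.
Hypothesis eirr : irreflexive e.

Definition Kset (A : {set T}) (k : nat) :=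
  [set S : {set T} | (S \subset A) && (#|S| == k) && cliqueb e S].
Local Notation N := (nbhd e).
Definition freeIn (A : {set T}) (m : nat) :=
  forall S : {set T}, S \subset A -> #|S| = m -> ~ clique e S.

Lemma inN x y : (y \in N x) = e x y. Proof. by rewrite inE. Qed.

Lemma KsetP (A : {set T}) k (S : {set T}) : reflect [/\ S \subset A, #|S| = k & clique e S] (S \in Kset A k).
Proof.
rewrite inE; apply: (iffP idP).
  by case/andP => /andP[sA /eqP ->] /cliquebP.
by case=> -> -> /cliquebP ->; rewrite eqxx.
Qed.

Lemma clique_ext x (S : {set T}) : clique e S -> (forall s, s \in S -> e x s) -> clique e (x |: S).
Proof.
move=> cS hx a b; rewrite !in_setU1 => /predU1P[->|aS] /predU1P[->|bS] nab.
- by rewrite eqxx in nab.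
- exact: hx.
- by rewrite esym; apply: hx.
- exact: cS.
Qed.

Lemma clique_sub (S S' : {set T}) : S' \subset S -> clique e S -> clique e S'.
Proof. by move=> /subsetP sS cS x y /sS xS /sS yS; apply: cS. Qed.

Lemma notin_N x (S : {set T}) : S \subset N x -> x \notin S.
Proof. by move=> /subsetP sS; apply/negP => /sS; rewrite inN eirr. Qed.

Variable R : realFieldType.
Variable D : R.
Hypothesis D0 : 0 <= D.

Fixpoint Gf (k : nat) (m : R) : R :=
  if k is k'.+1 then (2 * m - (k'.+3)%:R * D) * Gf k' (m - D) else 1.

Lemma natE1 k : ((2 * k).+1)%:R = 2 * k%:R + 1 :> R.
Proof. by rewrite -addn1 natrD natrM. Qed.
Lemma natE3 k : (k.+3)%:R = k%:R + 3 :> R.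
Proof. by rewrite -addn3 natrD. Qed.
Lemma natE1' k : ((2 * k.+1).+1)%:R = 2 * k%:R + 3 :> R.
Proof. have E : ((2 * k.+1).+1 = 2 * k + 3)%N by lia. by rewrite E natrD natrM. Qed.
Lemma natS k : (k.+1)%:R = k%:R + 1 :> R.
Proof. by rewrite -addn1 natrD. Qed.

Lemma Gf_mono k : forall m m', ((2 * k).+1)%:R * D <= 2 * m -> m <= m' ->
  0 <= Gf k m /\ Gf k m <= Gf k m'.
Proof.
elim: k => [|k IH] m m' h mm /=; first by rewrite ler01 lexx.
rewrite natE1' in h.
have h' : ((2 * k).+1)%:R * D <= 2 * (m - D) by rewrite natE1; lra.
have mm' : m - D <= m' - D by lra.
have [g0 gle] := IH _ (m' - D) h' mm'.
rewrite natE3.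
have k0 : 0 <= k%:R :> R := ler0n _ _.
have kD := mulr_ge0 k0 D0.
have a0 : 0 <= 2 * m - (k%:R + 3) * D by nra.
split; first exact: mulr_ge0.
by apply: ler_pM => //; lra.
Qed.

Lemma Gf_lb (t : R) : 0 <= t -> forall k m, ((2 * k).+1)%:R * (D + t) <= 2 * m ->
  (k`!)%:R * t ^+ k <= Gf k m.
Proof.
move=> t0; elim=> [|k IH] m h /=; first by rewrite fact0 expr0 mulr1.
rewrite natE1' in h; rewrite natE3.
have k0 : 0 <= k%:R :> R := ler0n _ _.
have h' : ((2 * k).+1)%:R * (D + t) <= 2 * (m - D) by rewrite natE1; nra.
have IHm := IH _ h'.
rewrite factS natrM exprS mulrACA.
apply: ler_pM => //.
- by rewrite mulr_ge0.
- by rewrite mulr_ge0 // exprn_ge0.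
- have kD := mulr_ge0 k0 D0; have kt := mulr_ge0 k0 t0; rewrite natS; nra.
Qed.


Lemma degw (A : {set T}) w : #|A :\: N w|%:R <= D -> #|A|%:R - D <= #|A :&: N w|%:R.
Proof.
move=> h; have := cardsID (N w) A => /(congr1 (fun n => n%:R : R)); rewrite natrD => E.
lra.
Qed.

Lemma claim (u v : T) (k : nat) : forall A : {set T},
  (forall y, y \in A -> #|A :\: N y|%:R <= D) ->
  freeIn A k.+2 -> u \in A -> v \in A -> ~~ e u v ->
  (exists S, S \in Kset (N u :&: N v :&: A) k) ->
  ((2 * k).+1)%:R * D <= 2 * #|A|%:R ->
  Gf k #|A|%:R <= (k`! * #|Kset (N u :&: N v :&: A) k|)%:R.
Proof.
elim: k => [|k IH] A hD hfree uA vA nuv [S0 hS0] hA.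
  by rewrite /= fact0 mul1n ler1n; apply/card_gt0P; exists S0.
set C := N u :&: N v :&: A.
have inC z : (z \in C) = [&& e u z, e v z & z \in A] by rewrite !inE andbA.
have CA : C \subset A by rewrite /C subsetIr.
have [S0sub S0card S0cl] := KsetP _ _ _ hS0.
have S0u : S0 \subset N u.
  by apply/subsetP => z /(subsetP S0sub); rewrite inC inN => /and3P[].
have S0v : S0 \subset N v.
  by apply/subsetP => z /(subsetP S0sub); rewrite inC inN => /and3P[].
have S0A : S0 \subset A by apply: subset_trans S0sub CA.
set good := [set x in C | [exists S', S' \in Kset (C :&: N x) k]].
have goodC : good \subset C by apply/subsetP => x; rewrite inE => /andP[].
have goodlb : 2 * #|A|%:R - (k.+3)%:R * D <= #|good|%:R.
  pose a y := (e y u + e y v + #|S0 :&: N y|)%N.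
  have full : forall y w, y \in A -> w \in A -> e y w -> S0 \subset N w -> ~~ (S0 \subset N y).
    move=> y w yA wA ew sw; apply/negP => sy.
    have h1 : w |: S0 \subset N y by rewrite subUset sub1set inN ew sy.
    apply: (hfree (y |: (w |: S0))).
    - apply/subsetP => z; rewrite !in_setU1 => /predU1P[->//|/predU1P[->//|zS]].
      + exact: (subsetP S0A).
    - by rewrite cardsU1 (notin_N h1) cardsU1 (notin_N sw) S0card.
    - apply: clique_ext; first apply: clique_ext => //.
      + by move=> s /(subsetP sw); rewrite inN.
      + by move=> s /(subsetP h1); rewrite inN.
  have ltk : forall y, ~~ (S0 \subset N y) -> (#|S0 :&: N y| <= k)%N.
    move=> y ns; have hS : (#|S0 :&: N y| <= k.+1)%N.
      by rewrite -S0card subset_leq_card // subsetIl.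
    rewrite -ltnS ltn_neqAle hS andbT -S0card.
    apply: contra ns => /eqP hc.
    have : S0 :&: N y == S0 by rewrite eqEcard subsetIl hc leqnn.
    by move/eqP/setIidPl.
  have pw : forall y, y \in A -> (a y <= k.+1 + (y \in good))%N.
    move=> y yA; rewrite /a.
    have hS : (#|S0 :&: N y| <= k.+1)%N by rewrite -S0card subset_leq_card // subsetIl.
    case Eu: (e y u); case Ev: (e y v) => /=.
    - have le := ltk _ (full _ _ yA uA Eu S0u).
      case: (ltngtP #|S0 :&: N y| k) => [lt|gt|eqk].
      + exact: (arL1 _ lt).
      + by rewrite ltnNge le in gt.
      + have yg : y \in good.
          rewrite inE; apply/andP; split.
            by rewrite inC [e u y]esym [e v y]esym Eu Ev yA.
          apply/existsP; exists (S0 :&: N y); apply/KsetP; split => //.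
          * exact: setSI.
          * exact: clique_sub (subsetIl _ _) S0cl.
        by rewrite yg eqk; apply: arL2.
    - have le := ltk _ (full _ _ yA uA Eu S0u); exact: (arL3 _ le).
    - have le := ltk _ (full _ _ yA vA Ev S0v); exact: (arL3 _ le).
    - exact: (arL4 _ hS).
  have sumE : (\sum_(y in A) a y =
      #|A :&: N u| + #|A :&: N v| + \sum_(s in S0) #|A :&: N s|)%N.
    rewrite /a !big_split /=; congr (_ + _ + _).
    - rewrite sum_indic; apply: eq_card => y; rewrite !inE esym.
      by [].
    - rewrite sum_indic; apply: eq_card => y; rewrite !inE esym.
      by [].
    - rewrite (eq_bigr (fun y => \sum_(s in S0) (e y s : nat))); last first.
        move=> y _; rewrite sum_indic; apply: eq_card => s; rewrite !inE.
        by [].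
      rewrite exchange_big /=; apply: eq_bigr => s sS; rewrite sum_indic.
      by apply: eq_card => y; rewrite !inE esym.
  have le_nat : (#|A :&: N u| + #|A :&: N v| + \sum_(s in S0) #|A :&: N s|
                 <= k.+1 * #|A| + #|good|)%N.
    rewrite -sumE; apply: leq_trans (leq_sum _ pw) _.
    rewrite big_split /= sum_nat_const mulnC leq_add2l sum_indic.
    by apply: subset_leq_card; apply/subsetP => y; rewrite inE => /andP[].
  have := le_nat; rewrite -(ler_nat R) !natrD natrM natr_sum => H.
  have Hs : (#|A|%:R - D) *+ k.+1 <= \sum_(s in S0) (#|A :&: N s|)%:R.
    rewrite -S0card -sumr_const; apply: ler_sum => s sS; apply: degw.
    exact: hD (subsetP S0A _ sS).
  have Hu := degw (hD _ uA); have Hv := degw (hD _ vA).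
  rewrite -mulr_natr in Hs.
  rewrite natS in H Hs; rewrite natE3.
  nra.
have dc : (\sum_(x in C) #|Kset (C :&: N x) k| <= k.+1 * #|Kset C k.+1|)%N.
  have inj : forall x, x \in C ->
      (#|Kset (C :&: N x) k| <= #|[set S in Kset C k.+1 | x \in S]|)%N.
    move=> x xC.
    have injf : {in Kset (C :&: N x) k &, injective (fun S => x |: S)}.
      move=> S1 S2 /KsetP[s1 _ _] /KsetP[s2 _ _] eq12.
      have n1 : x \notin S1 by apply: notin_N; apply: subset_trans s1 (subsetIr _ _).
      have n2 : x \notin S2 by apply: notin_N; apply: subset_trans s2 (subsetIr _ _).
      by rewrite -(setU1K n1) -(setU1K n2) eq12.
    rewrite -(card_in_imset injf); apply: subset_leq_card.
    apply/subsetP => _ /imsetP[S' hS' ->].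
    have [s' c' cl'] := KsetP _ _ _ hS'.
    have sx : S' \subset N x by apply: subset_trans s' (subsetIr _ _).
    rewrite inE setU11 andbT; apply/KsetP; split.
    - by rewrite subUset sub1set xC /=; apply: subset_trans s' (subsetIl _ _).
    - by rewrite cardsU1 (notin_N sx) c'.
    - by apply: clique_ext => // s /(subsetP sx); rewrite inN.
  apply: (leq_trans (leq_sum _ inj)).
  rewrite (eq_bigr (fun x => \sum_(S in Kset C k.+1) (x \in S : nat))); last first.
    by move=> x _; symmetry; apply: sum_indic.
  rewrite exchange_big /=.
  rewrite (eq_bigr (fun _ => k.+1)); first by rewrite sum_nat_const mulnC.
  move=> S /KsetP[sC cS _]; rewrite sum_indic -cS; apply: eq_card => x.
  rewrite inE; apply/andP/idP => [[]//| xS]; split => //; exact: (subsetP sC).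
have hA1 : ((2 * k).+1)%:R * D <= 2 * (#|A|%:R - D).
  by move: hA; rewrite natE1' natE1 => hA; lra.
have st2 : forall x, x \in good ->
    Gf k (#|A|%:R - D) <= (k`! * #|Kset (C :&: N x) k|)%:R.
  move=> x; rewrite inE => /andP[xC /existsP[S' hS']].
  move: (xC); rewrite inC => /and3P[eux evx xA].
  set A' := A :&: N x.
  have CE : C :&: N x = N u :&: N v :&: A' by rewrite /C /A' setIA.
  have cardA' : #|A|%:R - D <= #|A'|%:R by apply: degw; apply: hD.
  rewrite CE.
  have [_ mono] := Gf_mono hA1 cardA'.
  apply: le_trans mono _; apply: IH.
  - move=> y; rewrite inE => /andP[yA _]; apply: le_trans (hD y yA).
    by rewrite ler_nat; apply: subset_leq_card; apply: setSD; apply: subsetIl.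
  - move=> S2 sA c2 cl2.
    have sx : S2 \subset N x by apply: subset_trans sA (subsetIr _ _).
    apply: (hfree (x |: S2)).
    + by rewrite subUset sub1set xA /=; apply: subset_trans sA (subsetIl _ _).
    + by rewrite cardsU1 (notin_N sx) c2.
    + by apply: clique_ext => // s /(subsetP sx); rewrite inN.
  - by rewrite inE uA inN esym.
  - by rewrite inE vA inN esym.
  - exact: nuv.
  - by exists S'; rewrite -CE.
  - by move: hA; rewrite natE1' natE1 => hA; lra.
have [G0 _] := Gf_mono hA1 (lexx (#|A|%:R - D)).
rewrite /= -/C.
apply: le_trans (ler_wpM2r G0 goodlb) _.
rewrite mulr_natl -sumr_const.
apply: le_trans (ler_sum _ st2) _.
rewrite -natr_sum ler_nat -big_distrr /= factS mulnAC mulnC.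
apply: leq_mul => //; apply: leq_trans dc.
rewrite [X in (X <= _)%N]big_mkcond [X in (_ <= X)%N]big_mkcond /=.
apply: leq_sum => x _; case: ifP => xg //.
by rewrite (subsetP goodC x xg).
Qed.

End Aux.

Theorem proposition4p3 (R : realFieldType) (T : finType) (e : rel T)
    (r : nat) (eps : R) :
  (3 <= r)%N -> 0 < eps ->
  simple_graph e ->
  maximal_Kr_free e r ->
  (forall v : T,
     ((2 * r - 5)%N%:R / (2 * r - 3)%N%:R + eps) * #|T|%:R <= #|nbhd e v|%:R) ->
  ultra_maximal_Kr_free e r (eps ^+ (r - 2)%N).
Proof.
move=> r3 eps0 [esym eirr] [Hfree Hmax] Hdeg; split => // u v nuv neuv.
case: r r3 Hfree Hmax Hdeg => [|[|[|r']]] // _ Hfree Hmax Hdeg.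
have E5 : (2 * r'.+3 - 5 = 2 * r' + 1)%N by lia.
have E3 : (2 * r'.+3 - 3 = 2 * r' + 3)%N by lia.
have E2 : (r'.+3 - 2 = r'.+1)%N by lia.
rewrite E5 E3 in Hdeg; rewrite E2.
case: (boolP [exists S' : {set T}, (#|S'| == r'.+3) && cliqueb (add_edge e u v) S']); last first.
  move=> /existsPn H; exfalso; apply: (Hmax u v nuv neuv) => S cS cl.
  have cb := introT (cliquebP _ _) cl.
  by move: (H S); rewrite cS eqxx cb.
case/existsP => S' /andP[/eqP cS' /cliquebP clS'].
have uS' : u \in S'.
  apply/negPn/negP => nu; apply: (Hfree S' cS') => x y xS yS nxy.
  have xu : x != u by apply: contraNneq nu => <-.
  have yu : y != u by apply: contraNneq nu => <-.
  by rewrite -(add_edge_nu e v xu yu); apply: clS'.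
have vS' : v \in S'.
  apply/negPn/negP => nv; apply: (Hfree S' cS') => x y xS yS nxy.
  have xv : x != v by apply: contraNneq nv => <-.
  have yv : y != v by apply: contraNneq nv => <-.
  by rewrite -(add_edge_nv e u xv yv); apply: clS'.
set S := S' :\ u :\ v.
have inS x : (x \in S) = [&& x != v, x != u & x \in S'] by rewrite !inE.
have cS : #|S| = r'.+1.
  move: (cardsD1 u S') (cardsD1 v (S' :\ u)).
  rewrite uS' in_setD1 (eq_sym v u) nuv vS' cS' /= => h1 h2.
  rewrite /S; lia.
have hS : S \in Kset e (nbhd e u :&: nbhd e v :&: setT) r'.+1.
  apply/KsetP; split => //.
  - apply/subsetP => x; rewrite inS => /and3P[xv xu xS'].
    rewrite !inE /= andbT.
    have ux : u != x by rewrite eq_sym.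
    have vx : v != x by rewrite eq_sym.
    have vu : v != u by rewrite eq_sym.
    rewrite -(add_edge_nv e u nuv xv) -(add_edge_nu e v vu xu).
    by rewrite !clS' // eq_sym.
  - move=> x y; rewrite !inS => /and3P[xv xu xS] /and3P[yv yu yS] nxy.
    by rewrite -(add_edge_nu e v xu yu); apply: clS'.
set n := #|T|%:R.
set q := (2 * r' + 1)%:R : R.
set c := (q / (2 * r' + 3)%:R + eps).
have Ep : (2 * r' + 3)%:R = q + 2 :> R by rewrite /q -natrD -addnA.
rewrite Ep in Hdeg.
have q0 : 0 <= q by apply: ler0n.
set D := n - c * n.
have n0 : 0 <= n by apply: ler0n.
have D0 : 0 <= D.
  have := Hdeg u; have : #|nbhd e u|%:R <= n by rewrite ler_nat max_card.
  rewrite /D /c Ep; lra.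
have key : (q + 2) * (D + eps * n) = 2 * n.
  rewrite /D /c Ep; field.
  by apply: lt0r_neq0; have := ler0n R r'; lra.
have EE : ((2 * r'.+1).+1)%:R = q + 2 :> R.
  by rewrite -Ep; congr (_%:R); lia.
have en0 : 0 <= eps * n by rewrite mulr_ge0 // ltW.
have hA : ((2 * r'.+1).+1)%:R * D <= 2 * #|[set: T]|%:R.
  rewrite cardsT -/n EE -key; rewrite ler_pM2l; first lra.
  lra.
have hD : forall y, y \in [set: T] -> #|[set: T] :\: nbhd e y|%:R <= D.
  move=> y _; have := cardsID (nbhd e y) [set: T]; rewrite setTI cardsT => E.
  have : (#|nbhd e y| + #|[set: T] :\: nbhd e y|)%:R = n :> R by rewrite E.
  rewrite natrD => E'.
  have := Hdeg y; rewrite /D /c Ep; lra.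
have hfree : freeIn e [set: T] r'.+3 by move=> S0 _ h; exact: Hfree S0 h.
have Hc := claim esym eirr D0 hD hfree (in_setT u) (in_setT v) neuv (ex_intro _ S hS) hA.
have hlb : ((2 * r'.+1).+1)%:R * (D + eps * n) <= 2 * n by rewrite EE key.
have Hl := Gf_lb D0 en0 hlb.
rewrite cardsT -/n in Hc.
have := le_trans Hl Hc; rewrite natrM -exprMn ler_pM2l; last by rewrite ltr0n fact_gt0.
by rewrite setIT.
Qed.
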